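(* Let $n\ge4$, $r_1,r_2,r_3\in\mathbb{Z}_+$ with $r_1+r_2+r_3=n-1$, and let $-1<\alpha_1<1$, $0\le\alpha_2,\alpha_3<1$ with $\alpha_1+\alpha_2+\alpha_3=1$, $r_1+\alpha_1\ge r_2+\alpha_2$ and $r_1+\alpha_1\ge r_3+\alpha_3$. Then $$\mathfrak{L}_n(r_1,r_2,r_3,\alpha_1,\alpha_2,\alpha_3)\le \mathfrak{L}_n(r_1+r_3,r_2,0,\alpha_1,\alpha_2,\alpha_3)+2^{r_2+r_3+2}+2^{r_2}-r_3+\begin{cases}2^{r_3}, & r_2\ge1,\\ 2^{r_3+1}\ln n, & r_2=0.\end{cases}$$
   Context: Points of a triangle are identified with barycentric coordinates $\lambda=(\lambda_1,\lambda_2,\lambda_3)$, $\lambda_r\ge0$, $\sum\lambda_r=1$. For an integer $n\ge1$ let $I=\{i=(i_1,i_2,i_3)\in\mathbb{Z}_+^3: i_1+i_2+i_3=n\}$, and let $l_i(\lambda)=\prod_{s=1}^{3}\frac{1}{i_s!}\prod_{t=0}^{i_s-1}(n\lambda_s-t)$ (the Lagrange fundamental polynomials for the equally spaced nodes $i/n$, $i\in I$). The Lebesgue function is $\mathcal{L}_n(\lambda)=\sum_{i\in I}|l_i(\lambda)|$. For $r_s\in\mathbb{Z}_+$ with $r_1+r_2+r_3=n-1$ and reals $\alpha_s$ with $\alpha_1+\alpha_2+\alpha_3=1$, write $\mathfrak{L}_n(r_1,r_2,r_3,\alpha_1,\alpha_2,\alpha_3)=\mathcal{L}_n(\lambda)$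 where $\lambda_s=(r_s+\alpha_s)/n$, $s=1,2,3$. *)

(* Defs.v *)
From Stdlib Require Import Reals Lra Arith Factorial.
Open Scope R_scope.

Fixpoint fallprod (k : nat) (x : R) : R :=
  match k with
  | O => 1
  | S k' => fallprod k' x * (x - INR k')
  end.

Definition lag_factor (n k : nat) (lam : R) : R :=
  / INR (fact k) * fallprod k (INR n * lam).

Definition lag_poly (n i1 i2 i3 : nat) (l1 l2 l3 : R) : R :=
  lag_factor n i1 l1 * lag_factor n i2 l2 * lag_factor n i3 l3.

(* Lebesgue function: sum over i in I = {i in Z_+^3 : i1+i2+i3 = n}
   enumerated as i1 = 0..n, i2 = 0..n-i1, i3 = n-i1-i2. *)
Definition Lebesgue (n : nat) (l1 l2 l3 : R) : R :=
  sum_f_R0 (fun i1 =>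
    sum_f_R0 (fun i2 => Rabs (lag_poly n i1 i2 (n - i1 - i2) l1 l2 l3))
             (n - i1)) n.

Definition fL (n r1 r2 r3 : nat) (a1 a2 a3 : R) : R :=
  Lebesgue n ((INR r1 + a1) / INR n) ((INR r2 + a2) / INR n)
             ((INR r3 + a3) / INR n).

(* Main.v *)
Require Import Defs.
From Stdlib Require Import Reals Lra Lia Psatz Arith Factorial.
Open Scope R_scope.


Definition bb (x : R) (k : nat) : R := / INR (fact k) * fallprod k x.
Definition FF (x : R) (k : nat) : R := Rabs (bb x k).

Lemma fact_pos_R k : 0 < INR (fact k).
Proof. apply lt_0_INR, lt_O_fact. Qed.

Lemma fp_S_first k y : fallprod (S k) y = y * fallprod k (y - 1).
Proof.
  induction k as [|k IH]; [simpl; ring|].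
  change (fallprod (S (S k)) y) with (fallprod (S k) y * (y - INR (S k))).
  rewrite IH. change (fallprod (S k) (y-1)) with (fallprod k (y-1) * (y - 1 - INR k)).
  rewrite S_INR. ring.
Qed.

Lemma fp_split i s y : fallprod (i + s) y = fallprod s y * fallprod i (y - INR s).
Proof.
  induction i as [|i IH]; simpl; [ring|].
  rewrite IH, plus_INR. ring.
Qed.

Lemma fp_fact k p : fallprod k (INR (p + k)) * INR (fact p) = INR (fact (p + k)).
Proof.
  revert p; induction k as [|k IH]; intros p.
  - simpl. rewrite Nat.add_0_r. ring.
  - simpl fallprod. specialize (IH (S p)).
    replace (p + S k)%nat with (S p + k)%nat by lia.
    rewrite <- IH. change (fact (S p)) with (S p * fact p)%nat.
    rewrite mult_INR, !plus_INR, !S_INR. ring.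
Qed.

Lemma fp_mono k X Y : (forall t, (t < k)%nat -> 0 <= X - INR t) -> X <= Y ->
  0 <= fallprod k X <= fallprod k Y.
Proof.
  induction k as [|k IH]; intros H HXY; simpl; [lra|].
  destruct IH as [H1 H2]; [intros; apply H; lia|lra|].
  assert (0 <= X - INR k) by (apply H; lia).
  split; [nra|]. apply Rmult_le_compat; lra.
Qed.

Lemma fp_pos k X : (forall t, (t < k)%nat -> 0 < X - INR t) -> 0 < fallprod k X.
Proof.
  induction k as [|k IH]; intros H; simpl; [lra|].
  apply Rmult_lt_0_compat; [apply IH; intros; apply H; lia| apply H; lia].
Qed.

Lemma fp_prod2 k X Y Z W :
  (forall t, (t < k)%nat -> 0 <= (X - INR t) * (Y - INR t) <= (Z - INR t) * (W - INR t)) ->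
  0 <= fallprod k X * fallprod k Y <= fallprod k Z * fallprod k W.
Proof.
  induction k as [|k IH]; intros H; simpl; [lra|].
  destruct IH as [H1 H2]; [intros; apply H; lia|].
  destruct (H k ltac:(lia)) as [H3 H4].
  replace (fallprod k X * (X - INR k) * (fallprod k Y * (Y - INR k))) with
    ((fallprod k X * fallprod k Y) * ((X - INR k) * (Y - INR k))) by ring.
  replace (fallprod k Z * (Z - INR k) * (fallprod k W * (W - INR k))) with
    ((fallprod k Z * fallprod k W) * ((Z - INR k) * (W - INR k))) by ring.
  split; [nra|]. apply Rmult_le_compat; lra.
Qed.

Lemma bb_S k y : INR (S k) * bb y (S k) = y * bb (y - 1) k.
Proof.
  unfold bb. rewrite fp_S_first. change (fact (S k)) with (S k * fact k)%nat.
  pose proof (fact_pos_R k).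
  assert (INR (S k) > 0) by (apply lt_0_INR; lia).
  rewrite mult_INR. field. lra.
Qed.

Lemma vandermonde m : forall x z,
  sum_f_R0 (fun i => bb x i * bb z (m - i)) m = bb (x + z) m.
Proof.
  induction m as [|m IH]; intros x z.
  - simpl. unfold bb. simpl. field.
  - apply Rmult_eq_reg_l with (INR (S m)); [| apply not_0_INR; lia].
    rewrite bb_S.
    rewrite scal_sum.
    transitivity (sum_f_R0 (fun i => INR i * bb x i * bb z (S m - i)) (S m)
                + sum_f_R0 (fun i => bb x i * (INR (S m - i) * bb z (S m - i))) (S m)).
    + rewrite <- sum_plus. apply sum_eq. intros i Hi.
      rewrite minus_INR by lia. ring.
    + rewrite decomp_sum by lia. rewrite tech5. simpl pred.
      replace (INR 0 * bb x 0 * bb z (S m - 0)) with 0 by (simpl; ring).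
      replace (S m - S m)%nat with 0%nat by lia.
      replace (INR 0) with 0 by reflexivity.
      rewrite Rmult_0_l, Rmult_0_r, Rplus_0_l, Rplus_0_r.
      transitivity (x * bb (x - 1 + z) m + z * bb (x + (z - 1)) m).
      * rewrite <- (IH (x-1) z), <- (IH x (z-1)), !scal_sum.
        f_equal; apply sum_eq; intros i Hi.
        -- replace (S m - S i)%nat with (m - i)%nat by lia.
           rewrite bb_S. ring.
        -- replace (S m - i)%nat with (S (m - i)) by lia. rewrite bb_S. ring.
      * replace (x - 1 + z) with (x + z - 1) by ring.
        replace (x + (z - 1)) with (x + z - 1) by ring. ring.
Qed.

Lemma tri_swap N : forall h : nat -> nat -> R,
  sum_f_R0 (fun i => sum_f_R0 (fun j => h i j) (N - i)) N =
  sum_f_R0 (fun j => sum_f_R0 (fun i => h i j) (N - j)) N.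
Proof.
  induction N as [|N IH]; intros h; [reflexivity|].
  rewrite decomp_sum by lia. simpl pred.
  rewrite (sum_eq (fun i => sum_f_R0 (fun j => h (S i) j) (S N - S i))
                  (fun i => sum_f_R0 (fun j => h (S i) j) (N - i))) by (intros; f_equal; lia).
  rewrite (IH (fun i j => h (S i) j)).
  rewrite tech5. replace (S N - S N)%nat with 0%nat by lia. simpl sum_f_R0 at 3.
  rewrite (sum_eq (fun j => sum_f_R0 (fun i => h i j) (S N - j))
                  (fun j => h 0%nat j + sum_f_R0 (fun i => h (S i) j) (N - j))).
  - rewrite sum_plus. replace (S N - 0)%nat with (S N) by lia. rewrite tech5. change (sum_f_R0 (fun j => h 0%nat j) N) with (sum_f_R0 (h 0%nat) N). simpl. ring.
  - intros j Hj. replace (S N - j)%nat with (S (N - j)) by lia.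
    rewrite decomp_sum by lia. reflexivity.
Qed.

Lemma sum_nonneg f N : (forall i, (i <= N)%nat -> 0 <= f i) -> 0 <= sum_f_R0 f N.
Proof.
  intros H. induction N as [|N IH]; simpl; [apply H; lia|].
  assert (0 <= f (S N)) by (apply H; lia). assert (0 <= sum_f_R0 f N) by (apply IH; intros; apply H; lia). lra.
Qed.

Lemma sum_nonpos f N : (forall i, (i <= N)%nat -> f i <= 0) -> sum_f_R0 f N <= 0.
Proof.
  intros H. induction N as [|N IH]; simpl; [apply H; lia|].
  assert (f (S N) <= 0) by (apply H; lia). assert (sum_f_R0 f N <= 0) by (apply IH; intros; apply H; lia). lra.
Qed.

Lemma sum_prefix_le f m N : (m <= N)%nat -> (forall i, (i <= N)%nat -> 0 <= f i) ->
  sum_f_R0 f m <= sum_f_R0 f N.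
Proof.
  intros Hm H. induction N as [|N IH].
  - replace m with 0%nat by lia. lra.
  - destruct (Nat.eq_dec m (S N)) as [->|Hne]; [lra|].
    rewrite tech5. assert (0 <= f (S N)) by (apply H; lia).
    assert (sum_f_R0 f m <= sum_f_R0 f N) by (apply IH; [lia| intros; apply H; lia]). lra.
Qed.

Lemma sum_shift_le m s P Q :
  (forall j, (j <= m)%nat -> 0 <= Q j) ->
  (forall i, (i <= m)%nat -> (i + s <= m)%nat -> P i <= Q (i + s)%nat) ->
  (forall i, (i <= m)%nat -> (m < i + s)%nat -> P i <= 0) ->
  sum_f_R0 P m <= sum_f_R0 Q m.
Proof.
  intros HQ H1 H2.
  destruct s as [|s].
  - apply sum_Rle. intros i Hi. rewrite <- (Nat.add_0_r i) at 2. apply H1; lia.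
  - destruct (le_lt_dec (S s) m) as [Hsm|Hsm].
    + destruct (Nat.eq_dec (S s) m) as [Heq|Hne].
      * (* m = S s: only i = 0 can be matched *)
        subst m. rewrite decomp_sum by lia. simpl pred.
        assert (sum_f_R0 (fun i => P (S i)) s <= 0) by (apply sum_nonpos; intros; apply H2; lia).
        assert (P 0%nat <= Q (S s)) by (apply (H1 0%nat); lia).
        assert (sum_f_R0 Q s + Q (S s) = sum_f_R0 Q (S s)) by (rewrite tech5; reflexivity).
        assert (0 <= sum_f_R0 Q s) by (apply sum_nonneg; intros; apply HQ; lia). lra.
      * rewrite (tech2 P (m - S s) m) by lia.
        rewrite (tech2 Q s m) by lia.
        assert (sum_f_R0 (fun i => P (S (m - S s) + i)%nat) (m - S (m - S s)) <= 0)
          by (apply sum_nonpos; intros; apply H2; lia).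
        assert (0 <= sum_f_R0 Q s) by (apply sum_nonneg; intros; apply HQ; lia).
        assert (sum_f_R0 P (m - S s) <= sum_f_R0 (fun i => Q (S s + i)%nat) (m - S s)).
        { apply sum_Rle. intros i Hi. rewrite Nat.add_comm. apply H1; lia. }
        lra.
    + assert (sum_f_R0 P m <= 0) by (apply sum_nonpos; intros; apply H2; lia).
      assert (0 <= sum_f_R0 Q m) by (apply sum_nonneg; auto). lra.
Qed.

Lemma sum_reverse f m : sum_f_R0 (fun i => f (m - i)%nat) m = sum_f_R0 f m.
Proof.
  revert f; induction m as [|m IH]; intros f; [reflexivity|].
  rewrite decomp_sum by lia. simpl pred. rewrite tech5.
  rewrite (sum_eq (fun i => f (S m - S i)%nat) (fun i => f (m - i)%nat)) by (intros; f_equal; lia).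
  rewrite IH. replace (S m - 0)%nat with (S m) by lia. ring.
Qed.

Lemma sum_indicator_eq f k N : (k <= N)%nat ->
  sum_f_R0 (fun i => if (i <=? k)%nat then f i else 0) N = sum_f_R0 f k.
Proof.
  intros Hk. induction N as [|N IH].
  - replace k with 0%nat by lia. reflexivity.
  - destruct (Nat.eq_dec k (S N)) as [->|Hne].
    + rewrite tech5. rewrite (sum_eq _ f).
      * rewrite Nat.leb_refl. reflexivity.
      * intros i Hi. destruct (Nat.leb_spec i (S N)); [reflexivity|lia].
    + rewrite tech5, IH by lia. destruct (Nat.leb_spec (S N) k); [lia|ring].
Qed.

Definition AA (y1 y3 : R) (m : nat) : R :=
  sum_f_R0 (fun i => FF y1 i * FF y3 (m - i)) m.
Definition ng (t : R) : R := (Rabs t - t) / 2.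
Definition NA (y1 y3 : R) (m : nat) : R :=
  sum_f_R0 (fun i => ng (bb y1 i * bb y3 (m - i))) m.

Lemma ng_nonneg t : 0 <= ng t.
Proof. unfold ng. pose proof (Rle_abs t). lra. Qed.
Lemma ng_pos t : 0 <= t -> ng t = 0.
Proof. intros. unfold ng. rewrite Rabs_right by lra. lra. Qed.
Lemma ng_neg t : t <= 0 -> ng t = Rabs t.
Proof. intros. unfold ng. rewrite Rabs_left1 by lra. lra. Qed.
Lemma ng_le_abs t : ng t <= Rabs t.
Proof. unfold ng. pose proof (Rabs_pos t). pose proof (Rle_abs (-t)). rewrite Rabs_Ropp in H0. lra. Qed.

Lemma AA_NA y1 y3 m : AA y1 y3 m = bb (y1 + y3) m + 2 * NA y1 y3 m.
Proof.
  unfold AA, NA. rewrite <- vandermonde, scal_sum, <- sum_plus.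
  apply sum_eq. intros i Hi. unfold FF, ng. rewrite <- Rabs_mult. lra.
Qed.

Lemma leb_form n y1 y2 y3 : (0 < n)%nat ->
  Lebesgue n (y1 / INR n) (y2 / INR n) (y3 / INR n) =
  sum_f_R0 (fun i2 => FF y2 i2 * AA y1 y3 (n - i2)) n.
Proof.
  intros Hn. assert (Hn' : INR n <> 0) by (apply not_0_INR; lia).
  unfold Lebesgue.
  rewrite (tri_swap n (fun i1 i2 => Rabs (lag_poly n i1 i2 (n - i1 - i2) (y1 / INR n) (y2 / INR n) (y3 / INR n)))).
  apply sum_eq. intros i2 Hi2. unfold AA. rewrite scal_sum. apply sum_eq. intros i1 Hi1.
  unfold lag_poly, lag_factor, FF, bb.
  replace (INR n * (y1 / INR n)) with y1 by (field; auto).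
  replace (INR n * (y2 / INR n)) with y2 by (field; auto).
  replace (INR n * (y3 / INR n)) with y3 by (field; auto).
  replace (n - i1 - i2)%nat with (n - i2 - i1)%nat by lia.
  rewrite !Rabs_mult. ring.
Qed.

Lemma FF_nonneg x k : 0 <= FF x k.
Proof. apply Rabs_pos. Qed.

Lemma FF_rec x k : FF x (S k) * INR (S k) = FF x k * Rabs (x - INR k).
Proof.
  unfold FF, bb. change (fallprod (S k) x) with (fallprod k x * (x - INR k)).
  change (fact (S k)) with (S k * fact k)%nat. rewrite mult_INR.
  pose proof (fact_pos_R k). assert (0 < INR (S k)) by (apply lt_0_INR; lia).
  rewrite !Rabs_mult, !Rabs_inv, (Rabs_right (INR (S k) * INR (fact k))), (Rabs_right (INR (fact k))) by nra.
  field. lra.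
Qed.

Lemma FF_dec r a k : -1 < a -> a < 1 -> (S r <= k)%nat ->
  FF (INR r + a) (S k) <= FF (INR r + a) k.
Proof.
  intros Ha Ha' Hk. pose proof (FF_rec (INR r + a) k) as H.
  assert (INR (S r) <= INR k) by (apply le_INR; lia). rewrite S_INR in H0.
  rewrite Rabs_left1 in H by lra.
  assert (0 < INR (S k)) by (apply lt_0_INR; lia). rewrite S_INR in H, H1.
  pose proof (FF_nonneg (INR r + a) k). pose proof (FF_nonneg (INR r + a) (S k)).
  pose proof (pos_INR r).
  assert (FF (INR r + a) (S k) * (INR k + 1) <= FF (INR r + a) k * (INR k + 1)).
  { rewrite H. apply Rmult_le_compat_l; lra. }
  apply Rmult_le_reg_r with (INR k + 1); lra.
Qed.

Lemma FF_mono r a j : -1 < a -> a < 1 -> (S r <= j)%nat -> forall i, (j <= i)%nat ->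
  FF (INR r + a) i <= FF (INR r + a) j.
Proof.
  intros Ha Ha' Hj i Hi. induction Hi as [|i Hi IH]; [lra|].
  pose proof (FF_dec r a i Ha Ha' ltac:(lia)). lra.
Qed.

Lemma fp_le_fact r x : (forall t, (t < r)%nat -> 0 <= x - INR t) -> x <= INR (S r) ->
  0 <= fallprod r x <= INR (fact (S r)).
Proof.
  intros H1 H2. destruct (fp_mono r x (INR (1 + r)) H1) as [A B]; [replace (1 + r)%nat with (S r) by lia; exact H2|].
  pose proof (fp_fact r 1). simpl (fact 1) in H. rewrite Rmult_1_r in H.
  simpl (1 + r)%nat in *. lra.
Qed.

Lemma FF_r1_pos r a : 0 <= a < 1 ->
  0 <= bb (INR r + a) (S r) /\ FF (INR r + a) (S r) <= a.
Proof.
  intros Ha. unfold FF, bb. change (fallprod (S r) (INR r + a)) with (fallprod r (INR r + a) * (INR r + a - INR r)).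
  destruct (fp_le_fact r (INR r + a)) as [A B].
  { intros t Ht. assert (INR t <= INR r) by (apply le_INR; lia). lra. }
  { rewrite S_INR. lra. }
  pose proof (fact_pos_R (S r)).
  assert (0 <= / INR (fact (S r)) * (fallprod r (INR r + a) * (INR r + a - INR r))).
  { apply Rmult_le_pos; [left; apply Rinv_0_lt_compat; lra| nra]. }
  split; [lra|]. rewrite Rabs_right by lra.
  replace (INR r + a - INR r) with a by ring.
  apply Rmult_le_reg_l with (INR (fact (S r))); [lra|].
  rewrite <- Rmult_assoc, Rinv_r, Rmult_1_l by lra. nra.
Qed.

Lemma FF_r1_neg r a : -1 < a < 0 -> FF (INR r + a) (S r) <= 1 / (INR r + 1).
Proof.
  intros Ha. pose proof (FF_rec (INR r + a) r) as H.
  replace (INR r + a - INR r) with a in H by ring. rewrite Rabs_left in H by lra.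
  destruct (fp_mono r (INR r + a) (INR (0 + r))) as [A B].
  { intros t Ht. assert (INR t + 1 <= INR r) by (rewrite <- S_INR; apply le_INR; lia). lra. }
  { simpl. lra. }
  pose proof (fp_fact r 0). simpl (fact 0) in H0. simpl (0 + r)%nat in *. rewrite Rmult_1_r in H0.
  assert (FF (INR r + a) r <= 1).
  { unfold FF, bb. pose proof (fact_pos_R r).
    rewrite Rabs_mult, Rabs_inv, !Rabs_right by lra.
    apply Rmult_le_reg_l with (INR (fact r)); [lra|].
    rewrite <- Rmult_assoc, Rinv_r by lra. lra. }
  rewrite S_INR in H. pose proof (pos_INR r).
  pose proof (FF_nonneg (INR r + a) r).
  assert (FF (INR r + a) (S r) * (INR r + 1) <= 1) by nra.
  unfold Rdiv. apply Rmult_le_reg_r with (INR r + 1); [lra|].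
  rewrite Rmult_1_l, Rinv_l by lra. lra.
Qed.

Lemma binom_sum r : sum_f_R0 (fun k => C r k) r = 2 ^ r.
Proof.
  replace 2 with (1 + 1) by ring. rewrite binomial. apply sum_eq. intros. rewrite !pow1. ring.
Qed.

Lemma FF_head r a : 0 <= a < 1 -> sum_f_R0 (fun k => FF (INR r + a) k) (S r) <= 2 ^ (S r).
Proof.
  intros Ha. rewrite <- binom_sum. apply sum_Rle. intros k Hk.
  unfold FF, bb, C.
  destruct (fp_mono k (INR r + a) (INR ((S r - k) + k))) as [A B].
  { intros t Ht. assert (INR t <= INR r) by (apply le_INR; lia). lra. }
  { replace (S r - k + k)%nat with (S r) by lia. rewrite S_INR. lra. }
  pose proof (fp_fact k (S r - k)). replace (S r - k + k)%nat with (S r) in * by lia.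
  pose proof (fact_pos_R k). pose proof (fact_pos_R (S r - k)).
  rewrite Rabs_mult, Rabs_inv, !Rabs_right by lra.
  unfold Rdiv. rewrite <- H. field_simplify; [|lra|lra].
  apply Rmult_le_reg_r with (INR (fact k)); [lra|]. field_simplify; lra.
Qed.

Lemma FF_tail r a N : 0 <= a < 1 -> (S r <= N)%nat ->
  (INR r + a) * sum_f_R0 (fun k => FF (INR r + a) k) N <=
  (INR r + a) * sum_f_R0 (fun k => FF (INR r + a) k) (S r) + a * (1 - a).
Proof.
  intros Ha HN. set (x := INR r + a).
  assert (Hinv : forall M, (S r <= M)%nat ->
    x * sum_f_R0 (fun k => FF x k) M + INR (S M) * FF x (S M) =
    x * sum_f_R0 (fun k => FF x k) (S r) + INR (S (S r)) * FF x (S (S r))).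
  { intros M HM. induction HM as [|M HM IH]; [reflexivity|].
    rewrite <- IH. rewrite tech5.
    pose proof (FF_rec x (S M)) as H.
    assert (INR (S r) <= INR (S M)) by (apply le_INR; lia).
    unfold x in *. rewrite S_INR in H0. rewrite Rabs_left1 in H by lra.
    rewrite Rmult_comm in H. rewrite H. ring. }
  pose proof (Hinv N HN). pose proof (FF_rec x (S r)).
  unfold x in H0. rewrite (S_INR r) in H0. replace (INR r + a - (INR r + 1)) with (a - 1) in H0 by ring.
  rewrite Rabs_left1 in H0 by lra.
  destruct (FF_r1_pos r a Ha) as [_ Hb].
  pose proof (FF_nonneg x (S N)). assert (0 <= INR (S N)) by apply pos_INR.
  pose proof (FF_nonneg (INR r + a) (S r)).
  fold x in H0, Hb, H3. rewrite Rmult_comm in H0.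
  assert (INR (S (S r)) * FF x (S (S r)) <= a * (1 - a)) by nra.
  nra.
Qed.

Lemma bb_pos r a i : -1 < a -> (i <= r)%nat -> 0 < bb (INR r + a) i.
Proof.
  intros Ha Hi. unfold bb. apply Rmult_lt_0_compat; [apply Rinv_0_lt_compat, fact_pos_R|].
  apply fp_pos. intros t Ht. assert (INR t + 1 <= INR r) by (rewrite <- S_INR; apply le_INR; lia). lra.
Qed.

Lemma bb_nonneg r a k : 0 <= a -> (k <= S r)%nat -> 0 <= bb (INR r + a) k.
Proof.
  intros Ha Hk. unfold bb. apply Rmult_le_pos; [left; apply Rinv_0_lt_compat, fact_pos_R|].
  destruct (fp_mono k (INR r + a) (INR r + a)); [|lra|lra].
  intros t Ht. assert (INR t <= INR r) by (apply le_INR; lia). lra.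
Qed.

Lemma factor_ineq r1 a1 a3 (i j : R) U :
  -1 < a1 < 1 -> 0 <= a3 < 1 -> 0 < a1 + a3 -> (a1 < 0 -> 2 <= INR r1) ->
  0 <= i <= INR r1 -> 2 <= j -> 1 <= U ->
  0 <= (a3 + U) * (i + U) <= (INR r1 + a1 + U) * (j + U).
Proof.
  intros. pose proof (pos_INR r1).
  assert (S1 : (a3 + U) * (i + U) <= (a3 + U) * (INR r1 + U)) by (apply Rmult_le_compat_l; lra).
  assert (S2 : (2 + U) * (INR r1 + a1 + U) <= (j + U) * (INR r1 + a1 + U)) by (apply Rmult_le_compat_r; lra).
  assert (S3 : (a3 + U) * (INR r1 + U) <= (2 + U) * (INR r1 + a1 + U)).
  { destruct (Rle_lt_dec 0 a1).
    - apply Rmult_le_compat; lra.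
    - specialize (H2 r). nra. }
  split; [apply Rmult_le_pos; lra| lra].
Qed.

Lemma dom r1 r3 a1 a3 i j :
  -1 < a1 < 1 -> 0 <= a3 < 1 -> 0 < a1 + a3 -> (a1 < 0 -> 2 <= INR r1) ->
  (i <= r1)%nat -> (2 <= j)%nat -> bb (INR r3 + a3) (j + r3) < 0 ->
  ng (bb (INR r1 + a1) i * bb (INR r3 + a3) (j + r3)) <=
  ng (bb (INR r1 + a1 + INR r3) (i + r3) * bb a3 j).
Proof.
  intros Ha1 Ha3 Hs Hr1 Hi Hj Hneg.
  set (x1 := INR r1 + a1) in *. set (x3 := INR r3 + a3) in *.
  pose proof (bb_pos r1 a1 i ltac:(lra) Hi) as Hb1. fold x1 in Hb1.
  assert (HP3 : 0 < fallprod r3 x3).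
  { apply fp_pos. intros t Ht. assert (INR t + 1 <= INR r3) by (rewrite <- S_INR; apply le_INR; lia).
    unfold x3; lra. }
  assert (HP1 : 0 < fallprod r3 (x1 + INR r3)).
  { apply fp_pos. intros t Ht. assert (INR t + 1 <= INR r3) by (rewrite <- S_INR; apply le_INR; lia).
    pose proof (pos_INR r1). unfold x1; lra. }
  assert (Hfi : 0 < fallprod i x1).
  { apply fp_pos. intros t Ht. assert (INR t + 1 <= INR r1) by (rewrite <- S_INR; apply le_INR; lia).
    unfold x1; lra. }
  pose proof (fp_fact r3 i) as Fi. pose proof (fp_fact r3 j) as Fj.
  pose proof (fact_pos_R i). pose proof (fact_pos_R j).
  pose proof (fact_pos_R (i + r3)). pose proof (fact_pos_R (j + r3)).
  set (FI := fallprod r3 (INR (i + r3))) in *.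
  set (FJ := fallprod r3 (INR (j + r3))) in *.
  assert (HFI : 0 < FI) by nra. assert (HFJ : 0 < FJ) by nra.
  assert (E3 : bb x3 (j + r3) = / INR (fact (j + r3)) * (fallprod r3 x3 * fallprod j a3)).
  { unfold bb. rewrite fp_split. unfold x3. replace (INR r3 + a3 - INR r3) with a3 by ring. reflexivity. }
  assert (E1 : bb (x1 + INR r3) (i + r3) = / INR (fact (i + r3)) * (fallprod r3 (x1 + INR r3) * fallprod i x1)).
  { unfold bb. rewrite fp_split. replace (x1 + INR r3 - INR r3) with x1 by ring. reflexivity. }
  assert (Hfj : fallprod j a3 < 0).
  { rewrite E3 in Hneg. destruct (Rlt_le_dec (fallprod j a3) 0); [auto|].
    exfalso. assert (0 <= / INR (fact (j + r3)) * (fallprod r3 x3 * fallprod j a3)).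
    { apply Rmult_le_pos; [left; apply Rinv_0_lt_compat; lra| nra]. } lra. }
  set (c := fallprod i x1 * fallprod j a3 * / INR (fact i) * / INR (fact j)).
  assert (Hc : c < 0).
  { unfold c. assert (0 < / INR (fact i)) by (apply Rinv_0_lt_compat; lra).
    assert (0 < / INR (fact j)) by (apply Rinv_0_lt_compat; lra).
    assert (fallprod i x1 * fallprod j a3 < 0) by nra.
    assert (fallprod i x1 * fallprod j a3 * / INR (fact i) < 0) by nra. nra. }
  assert (TA : bb x1 i * bb x3 (j + r3) = c * (fallprod r3 x3 / FJ)).
  { rewrite E3. unfold c, bb. rewrite <- Fj. field. lra. }
  assert (TB : bb (x1 + INR r3) (i + r3) * bb a3 j = c * (fallprod r3 (x1 + INR r3) / FI)).
  { rewrite E1. unfold c, bb. rewrite <- Fi. field. lra. }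
  rewrite TA, TB.
  assert (Hkey : fallprod r3 x3 * FI <= fallprod r3 (x1 + INR r3) * FJ).
  { apply fp_prod2. intros t Ht.
    assert (INR t + 1 <= INR r3) by (rewrite <- S_INR; apply le_INR; lia).
    rewrite !plus_INR.
    replace (x3 - INR t) with (a3 + (INR r3 - INR t)) by (unfold x3; ring).
    replace (INR i + INR r3 - INR t) with (INR i + (INR r3 - INR t)) by ring.
    replace (x1 + INR r3 - INR t) with (INR r1 + a1 + (INR r3 - INR t)) by (unfold x1; ring).
    replace (INR j + INR r3 - INR t) with (INR j + (INR r3 - INR t)) by ring.
    apply factor_ineq; try lra.
    - split; [apply pos_INR| apply le_INR; lia].
    - replace 2 with (INR 2) by reflexivity. apply le_INR; lia. }
  assert (Hq : fallprod r3 x3 / FJ <= fallprod r3 (x1 + INR r3) / FI).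
  { unfold Rdiv. apply Rmult_le_reg_r with (FI * FJ); [nra|].
    field_simplify; lra. }
  assert (0 < fallprod r3 x3 / FJ) by (apply Rdiv_lt_0_compat; lra).
  rewrite !ng_neg by nra. rewrite !Rabs_left by nra. nra.
Qed.

Lemma match_NA r1 r3 a1 a3 m :
  -1 < a1 < 1 -> 0 <= a3 < 1 -> 0 < a1 + a3 -> (a1 < 0 -> 2 <= INR r1) ->
  NA (INR r1 + a1) (INR r3 + a3) m <=
  NA (INR r1 + a1 + INR r3) a3 m +
  sum_f_R0 (fun i => if (i <=? r1)%nat then 0 else ng (bb (INR r1 + a1) i * bb (INR r3 + a3) (m - i))) m.
Proof.
  intros Ha1 Ha3 Hs Hr1. unfold NA.
  rewrite (sum_eq (fun i => ng (bb (INR r1 + a1) i * bb (INR r3 + a3) (m - i)))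
     (fun i => (if (i <=? r1)%nat then ng (bb (INR r1 + a1) i * bb (INR r3 + a3) (m - i)) else 0) +
               (if (i <=? r1)%nat then 0 else ng (bb (INR r1 + a1) i * bb (INR r3 + a3) (m - i)))))
    by (intros; destruct (i <=? r1)%nat; ring).
  rewrite sum_plus. apply Rplus_le_compat_r.
  apply sum_shift_le with (s := r3).
  - intros; apply ng_nonneg.
  - intros i Him Hs3. destruct (Nat.leb_spec i r1) as [Hi|Hi]; [|apply ng_nonneg].
    pose proof (bb_pos r1 a1 i ltac:(lra) Hi).
    destruct (Rle_lt_dec 0 (bb (INR r3 + a3) (m - i))) as [H0|H0].
    + rewrite ng_pos by (apply Rmult_le_pos; lra). apply ng_nonneg.
    + assert (Hk : (S (S r3) <= m - i)%nat).
      { destruct (le_lt_dec (m - i) (S r3)); [|lia].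
        pose proof (bb_nonneg r3 a3 (m - i) ltac:(lra) l). lra. }
      replace (m - i)%nat with ((m - i - r3) + r3)%nat in * by lia.
      replace (m - (i + r3))%nat with (m - i - r3)%nat by lia.
      apply dom; auto; lia.
  - intros i Him Hs3. destruct (Nat.leb_spec i r1) as [Hi|Hi]; [|lra].
    pose proof (bb_pos r1 a1 i ltac:(lra) Hi).
    pose proof (bb_nonneg r3 a3 (m - i) ltac:(lra) ltac:(lia)).
    rewrite ng_pos by (apply Rmult_le_pos; lra). lra.
Qed.

Lemma FF_x1_le1 r1 a1 i : -1 < a1 < 1 -> (S r1 <= i)%nat -> FF (INR r1 + a1) i <= 1.
Proof.
  intros Ha Hi. pose proof (FF_mono r1 a1 (S r1) ltac:(lra) ltac:(lra) ltac:(lia) i Hi).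
  destruct (Rle_lt_dec 0 a1).
  - destruct (FF_r1_pos r1 a1 ltac:(lra)). lra.
  - pose proof (FF_r1_neg r1 a1 ltac:(lra)). pose proof (pos_INR r1).
    assert (1 / (INR r1 + 1) <= 1).
    { unfold Rdiv. rewrite Rmult_1_l. rewrite <- Rinv_1 at 2. apply Rinv_le_contravar; lra. }
    lra.
Qed.

Lemma FF_x1_third r1 a1 i : -1 < a1 < 1 -> (a1 < 0 -> 2 <= INR r1) -> (S r1 <= i)%nat ->
  bb (INR r1 + a1) i < 0 -> FF (INR r1 + a1) i <= 1/3.
Proof.
  intros Ha Hr Hi Hb. destruct (Rle_lt_dec 0 a1).
  - destruct (FF_r1_pos r1 a1 ltac:(lra)) as [Hp Hf].
    assert (Hi2 : (S (S r1) <= i)%nat).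
    { destruct (Nat.eq_dec i (S r1)); [subst; lra| lia]. }
    pose proof (FF_mono r1 a1 (S (S r1)) ltac:(lra) ltac:(lra) ltac:(lia) i Hi2).
    pose proof (FF_rec (INR r1 + a1) (S r1)) as HR.
    rewrite (S_INR r1) in HR. replace (INR r1 + a1 - (INR r1 + 1)) with (a1 - 1) in HR by ring.
    rewrite Rabs_left1 in HR by lra.
    assert (2 <= INR (S (S r1))) by (replace 2 with (INR 2) by reflexivity; apply le_INR; lia).
    pose proof (FF_nonneg (INR r1 + a1) (S (S r1))). pose proof (FF_nonneg (INR r1 + a1) (S r1)).
    assert (FF (INR r1 + a1) (S r1) * - (a1 - 1) <= a1 * (1 - a1)).
    { replace (FF (INR r1 + a1) (S r1) * - (a1 - 1)) with (FF (INR r1 + a1) (S r1) * (1 - a1)) by ring.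
      apply Rmult_le_compat_r; lra. }
    assert (a1 * (1 - a1) <= 1/4) by (pose proof (pow2_ge_0 (a1 - 1/2)); simpl in *; lra).
    assert (FF (INR r1 + a1) (S (S r1)) * 2 <= FF (INR r1 + a1) (S (S r1)) * INR (S (S r1)))
      by (apply Rmult_le_compat_l; lra).
    lra.
  - pose proof (FF_mono r1 a1 (S r1) ltac:(lra) ltac:(lra) ltac:(lia) i Hi).
    pose proof (FF_r1_neg r1 a1 ltac:(lra)). specialize (Hr r).
    assert (1 / (INR r1 + 1) <= 1/3).
    { unfold Rdiv. rewrite !Rmult_1_l. apply Rinv_le_contravar; lra. }
    lra.
Qed.

Definition WW r3 a3 k := if (k <=? S r3)%nat then FF (INR r3 + a3) k / 3 else FF (INR r3 + a3) k.

Lemma WW_nonneg r3 a3 k : 0 <= WW r3 a3 k.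
Proof. unfold WW. pose proof (FF_nonneg (INR r3 + a3) k). destruct (k <=? S r3)%nat; lra. Qed.

Lemma left_term r1 r3 a1 a3 i k :
  -1 < a1 < 1 -> 0 <= a3 < 1 -> (a1 < 0 -> 2 <= INR r1) -> (S r1 <= i)%nat ->
  ng (bb (INR r1 + a1) i * bb (INR r3 + a3) k) <= WW r3 a3 k.
Proof.
  intros Ha1 Ha3 Hr Hi. unfold WW.
  pose proof (FF_nonneg (INR r3 + a3) k). pose proof (FF_nonneg (INR r1 + a1) i).
  pose proof (ng_le_abs (bb (INR r1 + a1) i * bb (INR r3 + a3) k)).
  rewrite Rabs_mult in H1. fold (FF (INR r1 + a1) i) (FF (INR r3 + a3) k) in H1.
  destruct (Nat.leb_spec k (S r3)).
  - pose proof (bb_nonneg r3 a3 k ltac:(lra) H2).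
    destruct (Rle_lt_dec 0 (bb (INR r1 + a1) i)).
    + rewrite ng_pos by (apply Rmult_le_pos; lra). lra.
    + pose proof (FF_x1_third r1 a1 i Ha1 Hr Hi r). nra.
  - pose proof (FF_x1_le1 r1 a1 i Ha1 Hi). nra.
Qed.

Lemma lft_bound r1 r3 a1 a3 m n :
  -1 < a1 < 1 -> 0 <= a3 < 1 -> (a1 < 0 -> 2 <= INR r1) -> (m <= n)%nat ->
  sum_f_R0 (fun i => if (i <=? r1)%nat then 0 else ng (bb (INR r1 + a1) i * bb (INR r3 + a3) (m - i))) m
  <= sum_f_R0 (fun k => WW r3 a3 k) n.
Proof.
  intros Ha1 Ha3 Hr Hm.
  apply Rle_trans with (sum_f_R0 (fun i => WW r3 a3 (m - i)) m).
  - apply sum_Rle. intros i Hi. destruct (Nat.leb_spec i r1); [apply WW_nonneg|].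
    apply left_term; auto; lia.
  - rewrite (sum_reverse (fun k => WW r3 a3 k)). apply sum_prefix_le; auto.
    intros; apply WW_nonneg.
Qed.

Lemma SW_bound r3 a3 n : (1 <= r3)%nat -> 0 <= a3 < 1 -> (S r3 <= n)%nat ->
  sum_f_R0 (fun k => WW r3 a3 k) n <= 2 ^ (S r3) / 3 + 1/4.
Proof.
  intros Hr Ha Hn. set (x := INR r3 + a3).
  set (P := sum_f_R0 (fun k => FF x k) (S r3)).
  assert (HP : P <= 2 ^ (S r3)) by (apply FF_head; auto).
  assert (E : sum_f_R0 (fun k => WW r3 a3 k) n =
     sum_f_R0 (fun k => FF x k) n + sum_f_R0 (fun k => if (k <=? S r3)%nat then (- (2/3)) * FF x k else 0) n).
  { rewrite <- sum_plus. apply sum_eq. intros k Hk. unfold WW. fold x.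
    destruct (k <=? S r3)%nat; field. }
  rewrite E. rewrite (sum_indicator_eq (fun k => - (2/3) * FF x k) (S r3) n Hn).
  rewrite (sum_eq (fun k => - (2/3) * FF x k) (fun k => FF x k * (-(2/3))) (S r3)) by (intros; ring).
  rewrite <- scal_sum. fold P.
  pose proof (FF_tail r3 a3 n Ha Hn) as T.
  assert (1 <= x) by (unfold x; replace 1 with (INR 1) by reflexivity;
                       assert (INR 1 <= INR r3) by (apply le_INR; lia); lra).
  fold x P in T.
  assert (a3 * (1 - a3) <= 1/4) by (pose proof (pow2_ge_0 (a3 - 1/2)); simpl in *; lra).
  set (SS := sum_f_R0 (fun k => FF x k) n) in *.
  assert (SS <= P + 1/4).
  { assert (x * SS <= x * (P + 1/4)) by nra. apply Rmult_le_reg_l with x; lra. }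
  change (sum_f_R0 (FF x) (Datatypes.S r3)) with P. lra.
Qed.

Lemma SF_bound1 r a n : (1 <= r)%nat -> 0 <= a < 1 -> (S r <= n)%nat ->
  sum_f_R0 (fun k => FF (INR r + a) k) n <= 2 ^ (S r) + 1/4.
Proof.
  intros Hr Ha Hn. pose proof (FF_tail r a n Ha Hn) as T. pose proof (FF_head r a Ha) as H.
  set (x := INR r + a) in *.
  assert (1 <= x) by (unfold x; replace 1 with (INR 1) by reflexivity;
                       assert (INR 1 <= INR r) by (apply le_INR; lia); lra).
  assert (a * (1 - a) <= 1/4) by (pose proof (pow2_ge_0 (a - 1/2)); simpl in *; lra).
  set (SS := sum_f_R0 (fun k => FF x k) n) in *.
  set (P := sum_f_R0 (fun k => FF x k) (S r)) in *.
  assert (x * SS <= x * (P + 1/4)) by nra. apply Rmult_le_reg_l in H2; lra.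
Qed.

Lemma SF_bound0 a n : 0 <= a < 1 -> (1 <= n)%nat ->
  sum_f_R0 (fun k => FF (INR 0 + a) k) n <= 3.
Proof.
  intros Ha Hn. destruct (Rlt_le_dec 0 a) as [Hpos|Hz].
  - pose proof (FF_tail 0 a n Ha Hn) as T. pose proof (FF_head 0 a Ha) as H.
    simpl (INR 0) in *. rewrite Rplus_0_l in *.
    set (SS := sum_f_R0 (fun k => FF a k) n) in *.
    set (P := sum_f_R0 (fun k => FF a k) 1) in *. simpl (2 ^ 1) in H.
    assert (a * SS <= a * 3) by nra. apply Rmult_le_reg_l in H0; lra.
  - replace a with 0 by lra. simpl (INR 0). rewrite Rplus_0_l.
    rewrite decomp_sum by lia.
    rewrite (sum_eq (fun i => FF 0 (S i)) (fun _ => 0)).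
    + rewrite sum_cte. unfold FF, bb. simpl. rewrite Rinv_1, Rmult_1_l, Rabs_R1. lra.
    + intros i _. unfold FF, bb. rewrite fp_S_first. rewrite Rmult_0_l, Rmult_0_r, Rabs_R0. reflexivity.
Qed.

Lemma pow2_ge r : INR r + 1 <= 2 ^ r.
Proof.
  induction r as [|r IH]; [simpl; lra|]. rewrite S_INR. simpl.
  pose proof (pow_le 2 r ltac:(lra)). pose proof (pos_INR r). lra.
Qed.

Theorem lemma15 (n r1 r2 r3 : nat) (a1 a2 a3 : R) :
  (4 <= n)%nat ->
  (r1 + r2 + r3 = n - 1)%nat ->
  -1 < a1 < 1 -> 0 <= a2 < 1 -> 0 <= a3 < 1 ->
  a1 + a2 + a3 = 1 ->
  INR r1 + a1 >= INR r2 + a2 ->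
  INR r1 + a1 >= INR r3 + a3 ->
  fL n r1 r2 r3 a1 a2 a3 <=
    fL n (r1 + r3) r2 0 a1 a2 a3 + 2 ^ (r2 + r3 + 2) + 2 ^ r2 - INR r3
    + (if (1 <=? r2)%nat then 2 ^ r3 else 2 ^ (r3 + 1) * ln (INR n)).
Proof.
  intros Hn Hr Ha1 Ha2 Ha3 Hsum H12 H13.
  assert (Hlnpos : 1 < ln (INR n)).
  { rewrite <- (ln_exp 1) at 1. apply ln_increasing; [apply exp_pos|].
    pose proof exp_le_3. assert (4 <= INR n) by (replace 4 with (INR 4) by (simpl; ring); apply le_INR; lia).
    lra. }
  pose proof (pow2_ge r2) as P2. pose proof (pow2_ge r3) as P3.
  pose proof (pos_INR r3).
  destruct (Nat.eq_dec r3 0) as [Hr3|Hr3].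
  - subst r3. replace (r1 + 0)%nat with r1 by lia.
    assert (0 <= 2 ^ (r2 + 0 + 2) + 2 ^ r2 - INR 0 + (if (1 <=? r2)%nat then 2 ^ 0 else 2 ^ (0 + 1) * ln (INR n))).
    { pose proof (pow_le 2 (r2 + 0 + 2) ltac:(lra)). pose proof (pow_le 2 r2 ltac:(lra)).
      replace (INR 0) with 0 by reflexivity.
      destruct (1 <=? r2)%nat; [replace (2 ^ 0) with 1 by reflexivity; lra|].
      replace (2 ^ (0 + 1)) with 2 by (simpl; ring). lra. }
    lra.
  - assert (Hs : 0 < a1 + a3) by lra.
    assert (Hr1 : a1 < 0 -> 2 <= INR r1).
    { intros Hneg. assert (1 <= INR r3) by (replace 1 with (INR 1) by reflexivity; apply le_INR; lia).
      assert (1 < INR r1) by lra. replace 1 with (INR 1) in H1 by reflexivity.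
      apply INR_lt in H1. replace 2 with (INR 2) by reflexivity. apply le_INR; lia. }
    unfold fL. rewrite !leb_form by lia.
    replace (INR (r1 + r3) + a1) with (INR r1 + a1 + INR r3) by (rewrite plus_INR; ring).
    replace (INR 0 + a3) with a3 by (simpl; ring).
    set (x1 := INR r1 + a1). set (x2 := INR r2 + a2). set (x3 := INR r3 + a3).
    set (SW := sum_f_R0 (fun k => WW r3 a3 k) n).
    set (SF := sum_f_R0 (fun k => FF x2 k) n).
    assert (Hdiff : sum_f_R0 (fun i2 => FF x2 i2 * AA x1 x3 (n - i2)) n -
                    sum_f_R0 (fun i2 => FF x2 i2 * AA (x1 + INR r3) a3 (n - i2)) n <= 2 * SW * SF).
    { rewrite <- minus_sum. unfold SF. rewrite scal_sum. apply sum_Rle. intros i2 Hi2.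
      rewrite !AA_NA. replace (x1 + INR r3 + a3) with (x1 + x3) by (unfold x3; ring).
      pose proof (match_NA r1 r3 a1 a3 (n - i2) Ha1 Ha3 Hs Hr1) as M.
      pose proof (lft_bound r1 r3 a1 a3 (n - i2) n Ha1 Ha3 Hr1 ltac:(lia)) as L.
      fold x1 x3 SW in M, L. pose proof (FF_nonneg x2 i2).
      assert (NA x1 x3 (n - i2) - NA (x1 + INR r3) a3 (n - i2) <= SW) by lra.
      replace (FF x2 i2 * (bb (x1 + x3) (n - i2) + 2 * NA x1 x3 (n - i2)) -
               FF x2 i2 * (bb (x1 + x3) (n - i2) + 2 * NA (x1 + INR r3) a3 (n - i2)))
        with (2 * FF x2 i2 * (NA x1 x3 (n - i2) - NA (x1 + INR r3) a3 (n - i2))) by ring.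
      nra. }
    assert (HSW : SW <= 2 ^ (S r3) / 3 + 1/4) by (apply SW_bound; auto; lia).
    assert (HSW0 : 0 <= SW) by (apply sum_nonneg; intros; apply WW_nonneg).
    assert (HSF0 : 0 <= SF) by (apply sum_nonneg; intros; apply FF_nonneg).
    rewrite !pow_add. simpl (2 ^ 2). simpl (2 ^ 1). simpl (2 ^ S r3) in HSW.
    set (A := 2 ^ r2) in *. set (B := 2 ^ r3) in *.
    destruct (Nat.leb_spec 1 r2) as [Hr2|Hr2].
    + assert (HSF : SF <= 2 ^ (S r2) + 1/4) by (apply SF_bound1; auto; lia).
      simpl (2 ^ S r2) in HSF. fold A in HSF.
      assert (2 * SW * SF <= 2 * (2 * B / 3 + 1/4) * (2 * A + 1/4)).
      { apply Rmult_le_compat; nra. }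
      assert (1 <= A) by (pose proof (pos_INR r2); lra).
      assert (INR r3 + 1 <= B) by lra.
      nra.
    + assert (Hz : r2 = 0%nat) by lia. subst r2.
      assert (HSF : SF <= 3) by (unfold SF, x2; apply SF_bound0; auto; lia).
      assert (2 * SW * SF <= 2 * (2 * B / 3 + 1/4) * 3).
      { apply Rmult_le_compat; nra. }
      unfold A in *. simpl (2 ^ 0) in *.
      assert (B * ln (INR n) >= B * 1) by (apply Rle_ge, Rmult_le_compat_l; lra).
      lra.
Qed.
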